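(* Let $X,Y,Z$ be topological spaces, $f:X\times Y\to Z$ a mapping, and $V\subset Y$ a nonempty open set. Suppose that one of the following holds: (i) $f$ is vertically quasicontinuous at every point of $X\times V$, and for each $x\in X$ there is a dense subset $D_x$ of the space $V$ such that $f$ is lower $X$-quasicontinuous at every point of $\{x\}\times D_x$; (ii) $f$ is lower $Y$-quasicontinuous at every point of $X\times V$, and there is a dense subset $D$ of the space $V$ such that $f$ is lower $X$-quasicontinuous at every point of $X\times D$. Then the set-valued mapping $F^V:X\ni x\mapsto f_x(V)\in 2^Z$ is lower quasicontinuous.
   Context: $f_x(y)=f(x,y)$; $2^Z$ is the set of nonempty subsets of $Z$. A set-valued mapping $F:X\to 2^Z$ is lower quasicontinuous if for each $x_0\in X$, each neighborhood $U$ of $x_0$ and each open $W\subset Z$ with $F(x_0)\cap W\neq\emptyset$, there is an open $O\subset X$ with $\emptyset\ne O\subset U$ and $F(x)\cap W\neq\emptyset$ for every $x\in O$. The mapping $f$ is lower $X$-quasicontinuous (lower quasicontinuous with respect to the variable $x$) at $(a,b)$ if for each neighborhood $U$ of $a$ in $X$, each neighborhood $V'$ of $b$ in $Y$, and each neighborhood $W$ of $f(a,b)$ in $Z$, there is an open $O\subset X$ with $\emptyset\neq O\subset U$ and $f(\{x\}\times V')\cap W\neq\emptyset$ for every $x\in O$. Symmetrically, $f$ is lower $Y$-quasicontinuous at $(a,b)$ if for all such $U,V',W$ there is an open $O\subset Y$ with $\emptyset\ne O\subset V'$ and $f(U\times\{y\})\cap W\neq\emptyset$ for every $y\in O$. The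 mapping $f$ is vertically quasicontinuous at $(a,b)$ if for all such $U,V',W$ there are a point $x\in U$ and an open $O\subset Y$ with $\emptyset\neq O\subset V'$ and $f(\{x\}\times O)\subset W$. *)

(* Defs.v *)
From Stdlib Require Import Classical.

Set Implicit Arguments.

Record TopSpace := {
  carrier :> Type;
  is_open : (carrier -> Prop) -> Prop;
  open_empty : is_open (fun _ => False);
  open_full : is_open (fun _ => True);
  open_inter : forall A B, is_open A -> is_open B -> is_open (fun x => A x /\ B x);
  open_union : forall (I : Type) (F : I -> carrier -> Prop),
      (forall i, is_open (F i)) -> is_open (fun x => exists i, F i x)
}.

Arguments is_open {t}.

Definition nbhd {T : TopSpace} (x : T) (U : T -> Prop) : Prop :=
  exists O, is_open O /\ O x /\ (forall z, O z -> U z).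

(* D is a dense subset of the (subspace) V: D ⊆ V and every open set of the
   ambient space meeting V meets D. *)
Definition dense_in {T : TopSpace} (D V : T -> Prop) : Prop :=
  (forall y, D y -> V y) /\
  (forall W, is_open W -> (exists y, W y /\ V y) -> exists y, W y /\ D y).

(* Lower quasicontinuity of a set-valued mapping F : X -> 2^Z
   (F is given as a relation: F x z means z ∈ F(x)). *)
Definition lower_qc {X Z : TopSpace} (F : X -> Z -> Prop) : Prop :=
  forall (x0 : X) (U : X -> Prop) (W : Z -> Prop),
    nbhd x0 U -> is_open W -> (exists z, F x0 z /\ W z) ->
    exists O : X -> Prop, is_open O /\ (exists x, O x) /\
      (forall x, O x -> U x) /\
      (forall x, O x -> exists z, F x z /\ W z).

Definition lower_X_qc {X Y Z : TopSpace} (f : X -> Y -> Z) (a : X) (b : Y) : Prop :=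
  forall (U : X -> Prop) (V' : Y -> Prop) (W : Z -> Prop),
    nbhd a U -> nbhd b V' -> nbhd (f a b) W ->
    exists O : X -> Prop, is_open O /\ (exists x, O x) /\
      (forall x, O x -> U x) /\
      (forall x, O x -> exists y, V' y /\ W (f x y)).

Definition lower_Y_qc {X Y Z : TopSpace} (f : X -> Y -> Z) (a : X) (b : Y) : Prop :=
  forall (U : X -> Prop) (V' : Y -> Prop) (W : Z -> Prop),
    nbhd a U -> nbhd b V' -> nbhd (f a b) W ->
    exists O : Y -> Prop, is_open O /\ (exists y, O y) /\
      (forall y, O y -> V' y) /\
      (forall y, O y -> exists x, U x /\ W (f x y)).

Definition vert_qc {X Y Z : TopSpace} (f : X -> Y -> Z) (a : X) (b : Y) : Prop :=
  forall (U : X -> Prop) (V' : Y -> Prop) (W : Z -> Prop),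
    nbhd a U -> nbhd b V' -> nbhd (f a b) W ->
    exists x : X, U x /\
    exists O : Y -> Prop, is_open O /\ (exists y, O y) /\
      (forall y, O y -> V' y) /\
      (forall y, O y -> W (f x y)).

Definition FV {X Y Z : TopSpace} (f : X -> Y -> Z) (V : Y -> Prop) : X -> Z -> Prop :=
  fun x z => exists y, V y /\ f x y = z.

(* Main.v *)
Require Import Defs.

Lemma open_nbhd {T : TopSpace} {O : T -> Prop} {x : T} : is_open O -> O x -> nbhd x O.
Proof. intros H1 H2. exists O. auto. Qed.

Theorem proposition2p3 (X Y Z : TopSpace) (f : X -> Y -> Z) (V : Y -> Prop)
  (hVopen : is_open V) (hVne : exists y, V y) :
  ( (forall x y, V y -> vert_qc f x y) /\
    (forall x : X, exists Dx : Y -> Prop, dense_in Dx V /\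
        (forall y, Dx y -> lower_X_qc f x y)) )
  \/
  ( (forall x y, V y -> lower_Y_qc f x y) /\
    (exists D : Y -> Prop, dense_in D V /\
        (forall x y, D y -> lower_X_qc f x y)) ) ->
  lower_qc (FV f V).
Proof.
  intros H x0 U W [U0 [HU0o [HU0x HU0U]]] HWo [z [[y0 [Vy0 Ez]] Wz]]. subst z.
  assert (fin : forall x1 y1, U0 x1 -> V y1 -> W (f x1 y1) -> lower_X_qc f x1 y1 ->
    exists O : X -> Prop, is_open O /\ (exists x, O x) /\
      (forall x, O x -> U x) /\ (forall x, O x -> exists z, FV f V x z /\ W z)).
  { intros x1 y1 Hx1 Hy1 Hw Hq.
    destruct (Hq U0 V W (open_nbhd HU0o Hx1) (open_nbhd hVopen Hy1) (open_nbhd HWo Hw))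
      as [O [Oo [One [OU Of]]]].
    exists O. repeat split; auto.
    intros x Ox. destruct (Of x Ox) as [y [Vy Wy]]. exists (f x y). split; auto.
    exists y; auto. }
  destruct H as [[Hv Hd] | [Hy [D [[DV Dd] HD]]]].
  - destruct (Hv x0 y0 Vy0 U0 V W (open_nbhd HU0o HU0x) (open_nbhd hVopen Vy0)
      (open_nbhd HWo Wz)) as [x1 [Hx1 [O [Oo [[y' Oy'] [OV OW]]]]]].
    destruct (Hd x1) as [Dx [[DxV Dxd] HDx]].
    destruct (Dxd O Oo (ex_intro _ y' (conj Oy' (OV y' Oy')))) as [y1 [Oy1 Dy1]].
    apply (fin x1 y1); auto.
  - destruct (Hy x0 y0 Vy0 U0 V W (open_nbhd HU0o HU0x) (open_nbhd hVopen Vy0)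
      (open_nbhd HWo Wz)) as [O [Oo [[y' Oy'] [OV OW]]]].
    destruct (Dd O Oo (ex_intro _ y' (conj Oy' (OV y' Oy')))) as [y1 [Oy1 Dy1]].
    destruct (OW y1 Oy1) as [x1 [Hx1 Hw]].
    apply (fin x1 y1); auto.
Qed.
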